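(* For a paratopological group $H$ the following are equivalent: (a) $H$ is Bohr separated; (b) $H$ is a subgroup of a totally bounded paratopological group; (c) $H$ is a $\flat$-closed subgroup of a totally bounded paratopological group.
   Context: All topological spaces are Hausdorff. A paratopological group is a group with a Hausdorff topology making multiplication continuous; a topological group additionally has continuous inversion. A paratopological group $G$ is totally bounded if for every neighborhood $U$ of the unit there is a finite $F\subset G$ with $FU=UF=G$. $H$ is Bohr separated if there is a continuous bijective homomorphism of $H$ onto a totally bounded topological group. For $(G,\tau)$, $\tau^\flat$ is the strongest group topology on $G$ weaker than $\tau$, and a set is $\flat$-closed if closed in $\tau^\flat$. ''Subgroup'' means subgroup with the induced topology. *)

(* Defs.v *)
From Stdlib Require Import List.

Set Implicit Arguments.

Record Grp := {
  gcar :> Type;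
  gmul : gcar -> gcar -> gcar;
  ginv : gcar -> gcar;
  gone : gcar;
  gmulA : forall x y z, gmul x (gmul y z) = gmul (gmul x y) z;
  gmul1 : forall x, gmul gone x = x;
  gmulV : forall x, gmul (ginv x) x = gone
}.
Arguments gmul {_} _ _.
Arguments ginv {_} _.
Arguments gone {_}.

Definition is_topology {T : Type} (O : (T -> Prop) -> Prop) : Prop :=
  O (fun _ => True) /\
  (forall U V, O U -> O V -> O (fun x => U x /\ V x)) /\
  (forall S : (T -> Prop) -> Prop, (forall U, S U -> O U) ->
      O (fun x => exists U, S U /\ U x)).

Definition hausdorff_top {T : Type} (O : (T -> Prop) -> Prop) : Prop :=
  forall x y : T, x <> y ->
    exists U V, O U /\ O V /\ U x /\ V y /\ (forall z, U z -> V z -> False).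

Definition closed_in {T : Type} (O : (T -> Prop) -> Prop) (A : T -> Prop) :=
  O (fun x => ~ A x).

Definition mul_continuous {G : Grp} (O : (G -> Prop) -> Prop) : Prop :=
  forall x y : G, forall W, O W -> W (gmul x y) ->
    exists U V, O U /\ O V /\ U x /\ V y /\
      (forall u v, U u -> V v -> W (gmul u v)).

Definition inv_continuous {G : Grp} (O : (G -> Prop) -> Prop) : Prop :=
  forall W, O W -> O (fun x => W (ginv x)).

(** A group topology (not required to be Hausdorff), used for tau^flat. *)
Definition group_topology {G : Grp} (O : (G -> Prop) -> Prop) : Prop :=
  is_topology O /\ mul_continuous O /\ inv_continuous O.

Definition paratopological {G : Grp} (O : (G -> Prop) -> Prop) : Prop :=
  is_topology O /\ hausdorff_top O /\ mul_continuous O.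

Definition topological_group {G : Grp} (O : (G -> Prop) -> Prop) : Prop :=
  paratopological O /\ inv_continuous O.

Definition nbhd_one {G : Grp} (O : (G -> Prop) -> Prop) (N : G -> Prop) :=
  exists U, O U /\ U (@gone G) /\ (forall x, U x -> N x).

Definition totally_bounded {G : Grp} (O : (G -> Prop) -> Prop) : Prop :=
  forall U : G -> Prop, nbhd_one O U ->
    exists F : list G,
      (forall g : G, exists f u, In f F /\ U u /\ g = gmul f u) /\
      (forall g : G, exists f u, In f F /\ U u /\ g = gmul u f).

Definition is_hom {G K : Grp} (f : G -> K) : Prop :=
  forall x y, f (gmul x y) = gmul (f x) (f y).

Definition continuous_map {S T : Type} (OS : (S -> Prop) -> Prop)
  (OT : (T -> Prop) -> Prop) (f : S -> T) : Prop :=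
  forall V, OT V -> OS (fun x => V (f x)).

Definition bohr_separated {H : Grp} (OH : (H -> Prop) -> Prop) : Prop :=
  exists (K : Grp) (OK : (K -> Prop) -> Prop) (f : H -> K),
    topological_group OK /\ totally_bounded OK /\
    is_hom f /\ continuous_map OH OK f /\
    (forall x y, f x = f y -> x = y) /\ (forall k, exists x, f x = k).

Definition is_flat {G : Grp} (tau sigma : (G -> Prop) -> Prop) : Prop :=
  group_topology sigma /\ (forall U, sigma U -> tau U) /\
  (forall rho, group_topology rho -> (forall U, rho U -> tau U) ->
     forall U, rho U -> sigma U).

Definition flat_closed {G : Grp} (tau : (G -> Prop) -> Prop) (A : G -> Prop) :=
  exists sigma, is_flat tau sigma /\ closed_in sigma A.

(** f : H -> G realizes H as a subgroup of G with the induced topology: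
    an injective homomorphism such that the opens of H are exactly the
    preimages of opens of G. *)
Definition subgroup_embedding {H G : Grp} (OH : (H -> Prop) -> Prop)
  (OG : (G -> Prop) -> Prop) (f : H -> G) : Prop :=
  is_hom f /\ (forall x y, f x = f y -> x = y) /\
  (forall U, OH U <-> exists V, OG V /\ (forall x, U x <-> V (f x))).

(* Main.v *)
Require Import Defs.
From Stdlib Require Import Reals Lra Lia List Classical ClassicalEpsilon FunctionalExtensionality PropExtensionality ProofIrrelevance.

Arguments gmulA {_} _ _ _.
Arguments gmul1 {_} _.
Arguments gmulV {_} _.

Lemma gmulA' (G : Grp) (x y z : G) : gmul (gmul x y) z = gmul x (gmul y z).
Proof. now rewrite gmulA. Qed.

Lemma cancL (G : Grp) (x y : G) : gmul (ginv x) (gmul x y) = y.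
Proof. now rewrite gmulA, gmulV, gmul1. Qed.

Lemma mulV (G : Grp) (x : G) : gmul x (ginv x) = gone.
Proof.
  rewrite <- (gmul1 (gmul x (ginv x))).
  rewrite <- (gmulV (ginv x)).
  rewrite gmulA'. rewrite (gmulA (ginv x) x (ginv x)), gmulV, gmul1, gmulV. reflexivity.
Qed.

Lemma mulr1 (G : Grp) (x : G) : gmul x gone = x.
Proof. rewrite <- (gmulV x), gmulA, mulV, gmul1. reflexivity. Qed.

Lemma cancR (G : Grp) (x y : G) : gmul x (gmul (ginv x) y) = y.
Proof. now rewrite gmulA, mulV, gmul1. Qed.

Lemma inv_uniq (G : Grp) (x y : G) : gmul x y = gone -> ginv x = y.
Proof. intro E. rewrite <- (mulr1 _ (ginv x)), <- E, cancL. reflexivity. Qed.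

Lemma inv_inv (G : Grp) (x : G) : ginv (ginv x) = x.
Proof. apply inv_uniq. apply gmulV. Qed.

Lemma inv_mul (G : Grp) (x y : G) : ginv (gmul x y) = gmul (ginv y) (ginv x).
Proof. apply inv_uniq. rewrite gmulA', cancR, mulV. reflexivity. Qed.

Lemma inv1 (G : Grp) : ginv (@gone G) = gone.
Proof. apply inv_uniq. apply gmul1. Qed.

Ltac gsimpl := repeat (rewrite ?inv_mul, ?inv_inv, ?inv1, ?gmulA', ?gmulV, ?mulV,
   ?gmul1, ?mulr1, ?cancL, ?cancR).

Lemma test (G : Grp) (x y a : G) : gmul (gmul x y) (gmul (ginv y) (gmul (ginv x) a)) = a.
Proof. gsimpl. reflexivity. Qed.
Lemma open_of_local {T : Type} (O : (T -> Prop) -> Prop) (S : T -> Prop) :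
  is_topology O ->
  (forall p, S p -> exists B, O B /\ B p /\ forall x, B x -> S x) -> O S.
Proof.
  intros [_ [_ HU]] H.
  assert (E : S = (fun x => exists U, (O U /\ forall y, U y -> S y) /\ U x)).
  { apply functional_extensionality; intro x; apply propositional_extensionality; split.
    - intro Sx. destruct (H x Sx) as [B [OB [Bx BS]]]. exists B. auto.
    - intros [U [[_ US] Ux]]. auto. }
  rewrite E. apply HU. intros U [OU _]. exact OU.
Qed.

Lemma open_inter {T : Type} (O : (T -> Prop) -> Prop) U V :
  is_topology O -> O U -> O V -> O (fun x => U x /\ V x).
Proof. intros [_ [HI _]]. apply HI. Qed.

Lemma open_full {T : Type} (O : (T -> Prop) -> Prop) :
  is_topology O -> O (fun _ => True).
Proof. intros [H _]. exact H. Qed.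

Lemma transl {G : Grp} (O : (G -> Prop) -> Prop) W c :
  is_topology O -> mul_continuous O -> O W -> O (fun z => W (gmul c z)).
Proof.
  intros HT HM OW. apply open_of_local; auto. intros z Wz.
  destruct (HM c z W OW Wz) as [U [V [OU [OV [Uc [Vz HUV]]]]]].
  exists V. repeat split; auto.
Qed.

Lemma transl_r {G : Grp} (O : (G -> Prop) -> Prop) W c :
  is_topology O -> mul_continuous O -> O W -> O (fun z => W (gmul z c)).
Proof.
  intros HT HM OW. apply open_of_local; auto. intros z Wz.
  destruct (HM z c W OW Wz) as [U [V [OU [OV [Uz [Vc HUV]]]]]].
  exists U. repeat split; auto.
Qed.

Lemma left_nbhd {G : Grp} (O : (G -> Prop) -> Prop) W x :
  is_topology O -> mul_continuous O -> O W -> W x ->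
  exists U, O U /\ U gone /\ forall y, U y -> W (gmul x y).
Proof.
  intros HT HM OW Wx. exists (fun z => W (gmul x z)). split; [apply transl; auto|].
  rewrite mulr1. auto.
Qed.

Lemma halving {G : Grp} (O : (G -> Prop) -> Prop) W :
  is_topology O -> mul_continuous O -> O W -> W gone ->
  exists U, O U /\ U gone /\ forall x y, U x -> U y -> W (gmul x y).
Proof.
  intros HT HM OW We. assert (We' : W (gmul gone gone)) by (rewrite gmul1; auto).
  destruct (HM _ _ W OW We') as [A [B [OA [OB [Ae [Be HAB]]]]]].
  exists (fun x => A x /\ B x). split; [apply open_inter; auto|]. split; [auto|].
  intros x y [Ax _] [_ By]. auto.
Qed.

Lemma conj_nbhd {G : Grp} (O : (G -> Prop) -> Prop) W (c : G) :
  is_topology O -> mul_continuous O -> O W -> W gone ->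
  exists U, O U /\ U gone /\ forall x, U x -> W (gmul (ginv c) (gmul x c)).
Proof.
  intros HT HM OW We.
  exists (fun x => W (gmul (ginv c) (gmul x c))). split.
  - apply (transl_r O (fun z => W (gmul (ginv c) z))); auto. apply transl; auto.
  - split; auto. rewrite gmul1, gmulV. auto.
Qed.

Definition topo {G : Grp} (B : (G -> Prop) -> Prop) (S : G -> Prop) : Prop :=
  forall p, S p -> exists N, B N /\ forall x, N x -> S (gmul p x).

Definition Iint {G : Grp} (B : (G -> Prop) -> Prop) (S : G -> Prop) (p : G) : Prop :=
  exists N, B N /\ forall x, N x -> S (gmul p x).

Definition base_ok {G : Grp} (B : (G -> Prop) -> Prop) : Prop :=
  (exists N, B N) /\ (forall N, B N -> N gone) /\
  (forall N1 N2, B N1 -> B N2 -> exists N, B N /\ forall x, N x -> N1 x /\ N2 x) /\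
  (forall N, B N -> exists N', B N' /\ forall x y, N' x -> N' y -> N (gmul x y)) /\
  (forall N (c : G), B N -> exists N', B N' /\ forall x, N' x -> N (gmul (ginv c) (gmul x c))).

Lemma topo_top {G : Grp} (B : (G -> Prop) -> Prop) : base_ok B -> is_topology (topo B).
Proof.
  intros [[N0 BN0] [B1 [B3 _]]]. split; [|split].
  - intros p _. exists N0. auto.
  - intros U V HU HV p [Up Vp]. destruct (HU p Up) as [N1 [BN1 H1]].
    destruct (HV p Vp) as [N2 [BN2 H2]]. destruct (B3 N1 N2 BN1 BN2) as [N [BN HN]].
    exists N. split; auto. intros x Nx. destruct (HN x Nx). auto.
  - intros S HS p [U [SU Up]]. destruct (HS U SU p Up) as [N [BN HN]].
    exists N. split; auto. intros x Nx. exists U. auto.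
Qed.

Lemma Iint_sub {G : Grp} (B : (G -> Prop) -> Prop) S p : base_ok B -> Iint B S p -> S p.
Proof. intros [_ [B1 _]] [N [BN HN]]. rewrite <- (mulr1 _ p). apply HN, B1, BN. Qed.

Lemma topo_I {G : Grp} (B : (G -> Prop) -> Prop) S : base_ok B -> topo B (Iint B S).
Proof.
  intros HB. pose proof HB as [_ [_ [_ [B4 _]]]]. intros p [N [BN HN]].
  destruct (B4 N BN) as [N' [BN' H']]. exists N'. split; auto.
  intros x Nx. exists N'. split; auto. intros y Ny. rewrite gmulA'. auto.
Qed.

Lemma topo_mul {G : Grp} (B : (G -> Prop) -> Prop) : base_ok B -> mul_continuous (topo B).
Proof.
  intros HB. pose proof HB as [_ [B1 [_ [B4 B5]]]].
  intros x y W HW Wxy. destruct (HW _ Wxy) as [N [BN HN]].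
  destruct (B4 N BN) as [N' [BN' H']]. destruct (B5 N' y BN') as [N1 [BN1 H1]].
  exists (Iint B (fun a => N1 (gmul (ginv x) a))), (Iint B (fun b => N' (gmul (ginv y) b))).
  split; [apply topo_I; auto|]. split; [apply topo_I; auto|].
  split. { exists N1. split; auto. intros z Nz. rewrite cancL. auto. }
  split. { exists N'. split; auto. intros z Nz. rewrite cancL. auto. }
  intros u v Hu Hv. apply Iint_sub in Hu; auto. apply Iint_sub in Hv; auto.
  specialize (H' _ _ (H1 _ Hu) Hv).
  specialize (HN _ H'). revert HN. gsimpl. auto.
Qed.

Lemma topo_inv {G : Grp} (B : (G -> Prop) -> Prop) : base_ok B ->
  (forall N, B N -> exists N', B N' /\ forall x, N' x -> N (ginv x)) ->
  inv_continuous (topo B).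
Proof.
  intros HB B6. pose proof HB as [_ [B1 [_ [B4 B5]]]].
  intros W HW p Wp. destruct (HW _ Wp) as [N [BN HN]].
  destruct (B5 N (ginv p) BN) as [N1 [BN1 H1]].
  destruct (B6 N1 BN1) as [N2 [BN2 H2]].
  exists N2. split; auto. intros x Nx. specialize (HN _ (H1 _ (H2 _ Nx))).
  revert HN. gsimpl. auto.
Qed.

Lemma topo_haus {G : Grp} (B : (G -> Prop) -> Prop) : base_ok B ->
  (forall g : G, g <> gone -> exists N, B N /\ forall x y, N x -> N y -> gmul g x <> y) ->
  hausdorff_top (topo B).
Proof.
  intros HB B7 p q Hpq.
  assert (Hg : gmul (ginv q) p <> gone).
  { intro E. apply Hpq. rewrite <- (cancR _ q p), E, mulr1. reflexivity. }
  destruct (B7 _ Hg) as [N [BN HN]].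
  exists (Iint B (fun z => N (gmul (ginv p) z))), (Iint B (fun z => N (gmul (ginv q) z))).
  split; [apply topo_I; auto|]. split; [apply topo_I; auto|].
  split. { exists N. split; auto. intros z Nz. rewrite cancL. auto. }
  split. { exists N. split; auto. intros z Nz. rewrite cancL. auto. }
  intros z H1 H2. apply Iint_sub in H1; auto. apply Iint_sub in H2; auto.
  apply (HN _ _ H1 H2). gsimpl. reflexivity.
Qed.

Lemma topo_tb {G : Grp} (B : (G -> Prop) -> Prop) : base_ok B ->
  (forall N, B N -> exists F : list G,
      (forall g : G, exists f u, In f F /\ N u /\ g = gmul f u) /\
      (forall g : G, exists f u, In f F /\ N u /\ g = gmul u f)) ->
  totally_bounded (topo B).
Proof.
  intros HB HC U [O [OO [Oe HOU]]]. destruct (OO _ Oe) as [N [BN HN]].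
  destruct (HC N BN) as [F [F1 F2]]. exists F. split.
  - intro g. destruct (F1 g) as [f [u [? [? ?]]]]. exists f, u. split; auto. split; auto.
    apply HOU. rewrite <- (gmul1 u). auto.
  - intro g. destruct (F2 g) as [f [u [? [? ?]]]]. exists f, u. split; auto. split; auto.
    apply HOU. rewrite <- (gmul1 u). auto.
Qed.

Lemma sat_aux {G : Grp} (OG : (G -> Prop) -> Prop) (V U : G -> Prop) :
  is_topology OG -> mul_continuous OG -> OG V -> V gone ->
  (forall x y, V x -> V y -> U (gmul x y)) ->
  forall (Bl : list G) (O : G -> Prop), OG O -> (exists o, O o) ->
  (forall x, O x -> exists b v, In b Bl /\ V v /\ x = gmul b (ginv v)) ->
  exists b O', OG O' /\ (exists o, O' o) /\
    forall x, O' x -> exists u, U u /\ x = gmul b (ginv u).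
Proof.
  intros HT HM OV Ve HVU Bl. induction Bl as [|b0 Bl IH]; intros O OO [o Oo] HO.
  - destruct (HO o Oo) as [b [v [[] _]]].
  - destruct (classic (exists O', OG O' /\ (exists o, O' o) /\
        forall x, O' x -> exists b v, In b Bl /\ V v /\ x = gmul b (ginv v))) as [Hy|Hn].
    + destruct Hy as [O' [OO' [ne HO']]]. apply (IH O'); auto.
    + exists b0, O. split; auto. split; [exists o; auto|].
      intros x Ox.
      assert (Hx : exists z, (O z /\ V (gmul (ginv x) z)) /\
                  ~ exists b v, In b Bl /\ V v /\ z = gmul b (ginv v)).
      { apply NNPP. intro Hc. apply Hn.
        exists (fun z => O z /\ V (gmul (ginv x) z)). split.
        - apply open_inter; auto. apply transl; auto.
        - split. { exists x. rewrite gmulV. auto. }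
          intros z Hz. apply NNPP. intro Hz'. apply Hc. exists z. auto. }
      destruct Hx as [z [[Oz Vz] Hnz]].
      destruct (HO z Oz) as [b [w [Hb [Vw Ez]]]].
      destruct Hb as [<-|Hb]; [|exfalso; apply Hnz; exists b, w; auto].
      exists (gmul (gmul (ginv x) z) w). split; [apply HVU; auto|].
      subst z. gsimpl. reflexivity.
Qed.

Lemma saturated {G : Grp} (OG : (G -> Prop) -> Prop) (U : G -> Prop) :
  paratopological OG -> totally_bounded OG -> OG U -> U gone ->
  exists W z, OG W /\ W gone /\ forall w, W w -> U (gmul (ginv w) z).
Proof.
  intros [HT [_ HM]] TB OU Ue.
  destruct (halving OG U HT HM OU Ue) as [V [OV [Ve HV]]].
  destruct (TB V) as [F [_ F2]]. { exists V. auto. }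
  destruct (sat_aux OG V U HT HM OV Ve HV (map ginv F) (fun _ => True))
    as [b [O' [OO' [[o Oo] HO']]]]; auto.
  { apply open_full; auto. }
  { exists gone. auto. }
  { intros x _. destruct (F2 (ginv x)) as [f [u [Hf [Vu E]]]].
    exists (ginv f), u. split; [apply in_map; auto|]. split; auto.
    rewrite <- (inv_inv _ x), E. gsimpl. reflexivity. }
  exists (fun w => O' (gmul o w)), (gmul (ginv o) b). split; [apply transl; auto|].
  split; [rewrite mulr1; auto|].
  intros w Hw. destruct (HO' _ Hw) as [u [Uu E]].
  assert (E2 : gmul (ginv w) (gmul (ginv o) b) = gmul (ginv (gmul o w)) b) by (gsimpl; reflexivity).
  rewrite E2, E. gsimpl. auto.
Qed.

Lemma lemM {G : Grp} (OG : (G -> Prop) -> Prop) (U : G -> Prop) :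
  paratopological OG -> totally_bounded OG -> OG U -> U gone ->
  exists W, OG W /\ W gone /\ forall x y, W x -> W y ->
    exists a b, U a /\ U b /\ gmul (ginv x) y = gmul a (ginv b).
Proof.
  intros HP TB OU Ue. destruct (saturated OG U HP TB OU Ue) as [W [z [OW [We HW]]]].
  exists W. split; auto. split; auto. intros x y Wx Wy.
  exists (gmul (ginv x) z), (gmul (ginv y) z). split; auto. split; auto.
  gsimpl. reflexivity.
Qed.

Lemma lemL {G : Grp} (OG : (G -> Prop) -> Prop) (U : G -> Prop) :
  paratopological OG -> totally_bounded OG -> OG U -> U gone ->
  exists V, OG V /\ V gone /\ forall a b c d, V a -> V b -> V c -> V d ->
    exists a' b', U a' /\ U b' /\
      gmul (gmul a (ginv b)) (gmul c (ginv d)) = gmul a' (ginv b').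
Proof.
  intros HP TB OU Ue. pose proof HP as [HT [_ HM]].
  destruct (halving OG U HT HM OU Ue) as [U1 [OU1 [U1e HU1]]].
  destruct (lemM OG U1 HP TB OU1 U1e) as [W [OW [We HW]]].
  exists (fun x => W x /\ U1 x). split; [apply open_inter; auto|]. split; [auto|].
  intros a b c d [Wa Ua] [Wb Ub] [Wc Uc] [Wd Ud].
  destruct (HW b c Wb Wc) as [p [q [Up [Uq E]]]].
  exists (gmul a p), (gmul d q). split; auto. split; auto.
  assert (E2 : gmul (gmul a (ginv b)) (gmul c (ginv d)) = gmul a (gmul (gmul (ginv b) c) (ginv d)))
    by (gsimpl; reflexivity).
  rewrite E2, E. gsimpl. reflexivity.
Qed.

Lemma hom_one {G K : Grp} (f : G -> K) : is_hom f -> f gone = gone.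
Proof.
  intro Hf. assert (E : f gone = gmul (f gone) (f gone)) by (rewrite <- Hf, gmul1; auto).
  rewrite <- (cancL _ (f gone) (f gone)). rewrite <- E. apply gmulV.
Qed.

Lemma hom_inv {G K : Grp} (f : G -> K) x : is_hom f -> f (ginv x) = ginv (f x).
Proof.
  intro Hf. symmetry. apply inv_uniq. rewrite <- Hf, mulV. apply hom_one; auto.
Qed.

Lemma sep_nbhd {G : Grp} (OG : (G -> Prop) -> Prop) (g : G) :
  paratopological OG -> g <> gone ->
  exists U, OG U /\ U gone /\ forall a b, U a -> U b -> g <> gmul a (ginv b).
Proof.
  intros [HT [HH HM]] Hg.
  destruct (HH gone g (fun E => Hg (eq_sym E))) as [P [Q [OP [OQ [Pe [Qg HPQ]]]]]].
  exists (fun z => P z /\ Q (gmul g z)). split; [apply open_inter; auto; apply transl; auto|].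
  split; [rewrite mulr1; auto|].
  intros a b [Pa _] [_ Qb] E. apply (HPQ a); auto. subst g. revert Qb. gsimpl. auto.
Qed.

Definition BH {H G : Grp} (OG : (G -> Prop) -> Prop) (f : H -> G) (N : H -> Prop) : Prop :=
  exists U, OG U /\ U gone /\ forall x, N x <-> exists a b, U a /\ U b /\ f x = gmul a (ginv b).


Lemma BH_ok {H G : Grp} (OG : (G -> Prop) -> Prop) (f : H -> G) :
  paratopological OG -> totally_bounded OG -> is_hom f -> base_ok (BH OG f).
Proof.
  intros HP TB Hf. pose proof HP as [HT [HH HM]]. split; [|split; [|split; [|split]]].
  - exists (fun x => exists a b, (fun _ : G => True) a /\ (fun _ : G => True) b /\ f x = gmul a (ginv b)).
    exists (fun _ => True). split; [apply open_full; auto|]. split; auto. intro; tauto.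
  - intros N [U [OU [Ue HN]]]. apply HN. exists gone, gone. rewrite hom_one; auto.
    gsimpl. auto.
  - intros N1 N2 [U1 [OU1 [U1e H1]]] [U2 [OU2 [U2e H2]]].
    exists (fun x => exists a b, (U1 a /\ U2 a) /\ (U1 b /\ U2 b) /\ f x = gmul a (ginv b)).
    split.
    + exists (fun x => U1 x /\ U2 x). split; [apply open_inter; auto|]. split; auto. intro; tauto.
    + intros x [a [b [[? ?] [[? ?] E]]]]. split; [apply H1|apply H2]; exists a, b; auto.
  - intros N [U [OU [Ue HN]]].
    destruct (lemL OG U HP TB OU Ue) as [V [OV [Ve HV]]].
    exists (fun x => exists a b, V a /\ V b /\ f x = gmul a (ginv b)). split.
    + exists V. split; auto. split; auto. intro; tauto.
    + intros x y [a [b [Va [Vb Ex]]]] [c [d [Vc [Vd Ey]]]]. apply HN.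
      rewrite Hf, Ex, Ey. apply HV; auto.
  - intros N c [U [OU [Ue HN]]].
    destruct (conj_nbhd OG U (f c) HT HM OU Ue) as [U' [OU' [U'e HU']]].
    exists (fun x => exists a b, U' a /\ U' b /\ f x = gmul a (ginv b)). split.
    + exists U'. split; auto. split; auto. intro; tauto.
    + intros x [a [b [Ua [Ub E]]]]. apply HN.
      exists (gmul (ginv (f c)) (gmul a (f c))), (gmul (ginv (f c)) (gmul b (f c))).
      split; auto. split; auto. rewrite !Hf, hom_inv, E; auto. gsimpl. reflexivity.
Qed.

Lemma BH_inv {H G : Grp} (OG : (G -> Prop) -> Prop) (f : H -> G) :
  is_hom f -> forall N, BH OG f N -> exists N', BH OG f N' /\ forall x, N' x -> N (ginv x).
Proof.
  intros Hf N [U [OU [Ue HN]]]. exists N. split; [exists U; auto|].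
  intros x Nx. apply HN in Nx. destruct Nx as [a [b [Ua [Ub E]]]]. apply HN.
  exists b, a. split; auto. split; auto. rewrite hom_inv, E; auto. gsimpl. reflexivity.
Qed.

Lemma BH_haus {H G : Grp} (OG : (G -> Prop) -> Prop) (f : H -> G) :
  paratopological OG -> totally_bounded OG -> is_hom f -> (forall x y, f x = f y -> x = y) ->
  forall g : H, g <> gone -> exists N, BH OG f N /\ forall x y, N x -> N y -> gmul g x <> y.
Proof.
  intros HP TB Hf Hi g Hg. pose proof HP as [HT [HH HM]].
  assert (Hfg : f g <> gone). { intro E. apply Hg, Hi. rewrite hom_one; auto. }
  destruct (sep_nbhd OG (f g) HP Hfg) as [U1 [OU1 [U1e HU1]]].
  destruct (lemL OG U1 HP TB OU1 U1e) as [U [OU [Ue HU]]].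
  exists (fun x => exists a b, U a /\ U b /\ f x = gmul a (ginv b)). split.
  - exists U. split; auto. split; auto. intro; tauto.
  - intros x y [a [b [Ua [Ub Ex]]]] [c [d [Uc [Ud Ey]]]] E.
    destruct (HU c d b a Uc Ud Ub Ua) as [a' [b' [Ua' [Ub' E']]]].
    apply (HU1 a' b' Ua' Ub'). rewrite <- E'.
    assert (E2 : f g = gmul (f y) (ginv (f x))).
    { rewrite <- E, Hf. gsimpl. reflexivity. }
    rewrite E2, Ex, Ey. gsimpl. reflexivity.
Qed.

Lemma BH_tb {H G : Grp} (OG : (G -> Prop) -> Prop) (f : H -> G) :
  paratopological OG -> totally_bounded OG -> is_hom f ->
  forall N, BH OG f N -> exists F : list H,
      (forall g : H, exists f0 u, In f0 F /\ N u /\ g = gmul f0 u) /\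
      (forall g : H, exists f0 u, In f0 F /\ N u /\ g = gmul u f0).
Proof.
  intros HP TB Hf N [U [OU [Ue HN]]]. pose proof HP as [HT [HH HM]].
  destruct (lemM OG U HP TB OU Ue) as [W [OW [We HW]]].
  destruct (TB W) as [F1 [C1 _]]. { exists W; auto. }
  destruct (TB U) as [F2 [_ C2]]. { exists U; auto. }
  set (ch1 := fun f0 : G => epsilon (inhabits (@gone H)) (fun h => exists w, W w /\ f h = gmul f0 w)).
  set (ch2 := fun f0 : G => epsilon (inhabits (@gone H)) (fun h => exists w, U w /\ f h = gmul w f0)).
  exists (map ch1 F1 ++ map ch2 F2). split.
  - intro g. destruct (C1 (f g)) as [f0 [w0 [Hin [Ww0 E]]]].
    assert (Hc : exists w, W w /\ f (ch1 f0) = gmul f0 w).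
    { unfold ch1. apply epsilon_spec. exists g, w0. auto. }
    destruct Hc as [w1 [Ww1 E1]].
    exists (ch1 f0), (gmul (ginv (ch1 f0)) g). split; [apply in_or_app; left; apply in_map; auto|].
    split; [|gsimpl; reflexivity].
    apply HN. destruct (HW w1 w0 Ww1 Ww0) as [a [b [Ua [Ub Eab]]]]. exists a, b.
    split; auto. split; auto. rewrite Hf, hom_inv, E1, E, <- Eab; auto. gsimpl. reflexivity.
  - intro g. destruct (C2 (f g)) as [f0 [w0 [Hin [Uw0 E]]]].
    assert (Hc : exists w, U w /\ f (ch2 f0) = gmul w f0).
    { unfold ch2. apply epsilon_spec. exists g, w0. auto. }
    destruct Hc as [w1 [Uw1 E1]].
    exists (ch2 f0), (gmul g (ginv (ch2 f0))). split; [apply in_or_app; right; apply in_map; auto|].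
    split; [|gsimpl; reflexivity].
    apply HN. exists w0, w1. split; auto. split; auto.
    rewrite Hf, hom_inv, E1, E; auto. gsimpl. reflexivity.
Qed.

Lemma b_to_a {H : Grp} (OH : (H -> Prop) -> Prop) :
  (exists (G : Grp) (OG : (G -> Prop) -> Prop) (f : H -> G),
     paratopological OG /\ totally_bounded OG /\ subgroup_embedding OH OG f) ->
  bohr_separated OH.
Proof.
  intros [G [OG [f [HP [TB [Hf [Hi HE]]]]]]]. pose proof HP as [HT [HH HM]].
  pose proof (BH_ok OG f HP TB Hf) as Hok.
  exists H, (topo (BH OG f)), (fun x => x). split; [|split; [|split; [|split; [|split]]]].
  - split; [split; [|split]|].
    + apply topo_top; auto.
    + apply topo_haus; auto. apply BH_haus; auto.
    + apply topo_mul; auto.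
    + apply topo_inv; auto. apply BH_inv; auto.
  - apply topo_tb; auto. apply BH_tb; auto.
  - intros x y; auto.
  - intros V HV. apply HE.
    exists (fun g => exists p U, V p /\ OG U /\ U gone /\
       (forall x a b, U a -> U b -> f x = gmul a (ginv b) -> V (gmul p x)) /\
       U (gmul (ginv (f p)) g)).
    split.
    + apply open_of_local; auto. intros g [p [U [Vp [OU [Ue [HU Ug]]]]]].
      exists (fun g' => U (gmul (ginv (f p)) g')). split; [apply transl; auto|]. split; auto.
      intros x Ux. exists p, U. auto.
    + intro x. split.
      * intro Vx. destruct (HV x Vx) as [N [[U [OU [Ue HN]]] HN2]].
        exists x, U. split; auto. split; auto. split; auto. split.
        -- intros y a b Ua Ub E. apply HN2, HN. exists a, b. auto.
        -- rewrite gmulV. auto.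
      * intros [p [U [Vp [OU [Ue [HU Ux]]]]]].
        replace x with (gmul p (gmul (ginv p) x)) by (gsimpl; reflexivity).
        apply (HU _ (gmul (ginv (f p)) (f x)) gone); auto.
        rewrite Hf, hom_inv; auto. gsimpl. reflexivity.
  - auto.
  - intro k. exists k. auto.
Qed.

Open Scope R_scope.

Definition Tc := {x : R | 0 <= x < 1}.
Definition tval (x : Tc) : R := proj1_sig x.

Lemma tb (x : Tc) : 0 <= tval x < 1.
Proof. destruct x; simpl; auto. Qed.

Lemma teq (x y : Tc) : tval x = tval y -> x = y.
Proof.
  destruct x as [a pa], y as [b pb]; unfold tval; simpl. intros ->. f_equal. apply proof_irrelevance.
Qed.

Definition tmk (r : R) : Tc.
Proof.
  destruct (Rle_dec 0 r) as [h1|h1]; [destruct (Rlt_dec r 1) as [h2|h2]|].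
  - exact (exist _ r (conj h1 h2)).
  - refine (exist _ 0 _). lra.
  - refine (exist _ 0 _). lra.
Defined.

Lemma tmk_val r : 0 <= r < 1 -> tval (tmk r) = r.
Proof.
  intros [h1 h2]. unfold tmk. destruct (Rle_dec 0 r); [|lra]. destruct (Rlt_dec r 1); [|lra].
  reflexivity.
Qed.

Definition wrap (s : R) : R := if Rlt_dec s 1 then s else s - 1.

Definition tadd (x y : Tc) : Tc := tmk (wrap (tval x + tval y)).
Definition tzero : Tc := tmk 0.
Definition tinv (x : Tc) : Tc := tmk (if Req_EM_T (tval x) 0 then 0 else 1 - tval x).

Lemma tzero_val : tval tzero = 0.
Proof. apply tmk_val. lra. Qed.

Lemma tadd_spec x y :
  (tval x + tval y < 1 /\ tval (tadd x y) = tval x + tval y) \/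
  (1 <= tval x + tval y /\ tval (tadd x y) = tval x + tval y - 1).
Proof.
  pose proof (tb x). pose proof (tb y). unfold tadd, wrap.
  destruct (Rlt_dec (tval x + tval y) 1).
  - left. split; auto. apply tmk_val. lra.
  - right. split; [lra|]. apply tmk_val. lra.
Qed.

Lemma tinv_spec x :
  (tval x = 0 /\ tval (tinv x) = 0) \/ (0 < tval x /\ tval (tinv x) = 1 - tval x).
Proof.
  pose proof (tb x). unfold tinv. destruct (Req_EM_T (tval x) 0).
  - left. split; auto. apply tmk_val. lra.
  - right. split; [lra|]. apply tmk_val. lra.
Qed.


Lemma tadd_assoc x y z : tadd x (tadd y z) = tadd (tadd x y) z.
Proof.
  apply teq. pose proof (tb x). pose proof (tb y). pose proof (tb z).
  destruct (tadd_spec y z) as [[a1 a2]|[a1 a2]];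
  destruct (tadd_spec x (tadd y z)) as [[b1 b2]|[b1 b2]];
  destruct (tadd_spec x y) as [[c1 c2]|[c1 c2]];
  destruct (tadd_spec (tadd x y) z) as [[d1 d2]|[d1 d2]]; lra.
Qed.

Lemma tadd0 x : tadd tzero x = x.
Proof.
  apply teq. pose proof (tb x). pose proof tzero_val.
  destruct (tadd_spec tzero x) as [[a1 a2]|[a1 a2]]; lra.
Qed.

Lemma taddV x : tadd (tinv x) x = tzero.
Proof.
  apply teq. pose proof (tb x). pose proof tzero_val. pose proof (tb (tinv x)).
  destruct (tinv_spec x) as [[a1 a2]|[a1 a2]];
  destruct (tadd_spec (tinv x) x) as [[b1 b2]|[b1 b2]]; lra.
Qed.

Lemma tadd_comm x y : tadd x y = tadd y x.
Proof.
  apply teq.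
  destruct (tadd_spec x y) as [[b1 b2]|[b1 b2]];
  destruct (tadd_spec y x) as [[c1 c2]|[c1 c2]]; lra.
Qed.

Lemma tconj a t : tadd (tinv a) (tadd t a) = t.
Proof.
  rewrite (tadd_comm t a), tadd_assoc, taddV, tadd0. reflexivity.
Qed.

Lemma tgrid (d : R) : 0 < d -> forall m : nat, forall s, 0 < s <= INR m * d ->
  exists k, (k < m)%nat /\ INR k * d < s <= INR (S k) * d.
Proof.
  intros hd m. induction m as [|m IH]; intros s [h1 h2].
  - simpl in h2. lra.
  - destruct (Rle_dec s (INR m * d)) as [h|h].
    + destruct (IH s) as [k [hk hs]]; [lra|]. exists k. split; auto.
    + exists m. split; auto. split; lra.
Qed.

Lemma tcover (eps : R) : 0 < eps -> exists FT : list Tc, forall s : Tc,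
  exists r t, In r FT /\ 0 < tval t < eps /\ s = tadd r t.
Proof.
  intros he. destruct (archimed_cor1 (Rmin eps (1/2))) as [n [hn hn0]].
  { apply Rmin_glb_lt; lra. }
  pose proof (Rmin_l eps (1/2)). pose proof (Rmin_r eps (1/2)).
  assert (hN : 0 < INR n) by (apply lt_0_INR; auto).
  set (d := / INR n).
  assert (hd : 0 < d) by (apply Rinv_0_lt_compat; auto).
  assert (hnd : INR n * d = 1) by (unfold d; field; lra).
  assert (hde : d < eps /\ d < 1/2) by (unfold d; lra).
  exists (map (fun k => tmk (INR k * d)) (seq 0 n)). intro s. pose proof (tb s).
  destruct (Req_dec (tval s) 0) as [h0|h0].
  - destruct n as [|m]; [lia|].
    rewrite S_INR in hnd.
    exists (tmk (INR m * d)), (tmk d). split.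
    { apply (in_map (fun k => tmk (INR k * d))). apply in_seq. lia. }
    assert (hm : 0 <= INR m) by apply pos_INR.
    rewrite tmk_val by lra. split; [lra|].
    apply teq. destruct (tadd_spec (tmk (INR m * d)) (tmk d)) as [[a1 a2]|[a1 a2]];
    rewrite ?tmk_val in a1, a2 by nra; try lra.
  - destruct (tgrid d hd n (tval s)) as [k [hk [hs1 hs2]]]; [lra|].
    rewrite S_INR in hs2.
    assert (hk0 : 0 <= INR k) by apply pos_INR.
    exists (tmk (INR k * d)), (tmk (tval s - INR k * d)). split.
    { apply (in_map (fun k => tmk (INR k * d))). apply in_seq. lia. }
    rewrite tmk_val by lra. split; [lra|].
    apply teq. destruct (tadd_spec (tmk (INR k * d)) (tmk (tval s - INR k * d))) as [[a1 a2]|[a1 a2]];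
    rewrite ?tmk_val in a1, a2 by nra; lra.
Qed.

Close Scope R_scope.

Open Scope R_scope.

Lemma GT_A (H : Grp) (x y z : H * Tc) :
  (gmul (fst x) (gmul (fst y) (fst z)), tadd (snd x) (tadd (snd y) (snd z))) =
  (gmul (gmul (fst x) (fst y)) (fst z), tadd (tadd (snd x) (snd y)) (snd z)).
Proof. rewrite gmulA, tadd_assoc. reflexivity. Qed.

Definition GT (H : Grp) : Grp.
Proof.
  refine {| gcar := (gcar H * Tc)%type;
            gmul := fun p q => (gmul (fst p) (fst q), tadd (snd p) (snd q));
            ginv := fun p => (ginv (fst p), tinv (snd p));
            gone := (gone, tzero) |}.
  - intros x y z. simpl. apply GT_A.
  - intros [x t]. simpl. rewrite gmul1, tadd0. reflexivity.
  - intros [x t]. simpl. rewrite gmulV, taddV. reflexivity.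
Defined.

Definition NB {H K : Grp} (phi : H -> K) (U : H -> Prop) (V : K -> Prop) (e : R)
  (z : GT H) : Prop :=
  V (phi (fst z)) /\ tval (snd z) < e /\ (tval (snd z) = 0 -> U (fst z)).

Definition BG {H K : Grp} (OH : (H -> Prop) -> Prop) (OK : (K -> Prop) -> Prop)
  (phi : H -> K) (N : GT H -> Prop) : Prop :=
  exists U V e, OH U /\ U gone /\ OK V /\ V gone /\ 0 < e /\ e <= 1/2 /\
    forall z, N z <-> NB phi U V e z.

Lemma mkBG {H K : Grp} (OH : (H -> Prop) -> Prop) (OK : (K -> Prop) -> Prop) (phi : H -> K) U V e :
  OH U -> U gone -> OK V -> V gone -> 0 < e -> e <= 1/2 -> BG OH OK phi (NB phi U V e).
Proof. intros. exists U, V, e. repeat (split; [assumption|]). intro; tauto. Qed.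

Lemma BG_ok {H K : Grp} (OH : (H -> Prop) -> Prop) (OK : (K -> Prop) -> Prop) (phi : H -> K) :
  paratopological OH -> paratopological OK -> is_hom phi -> base_ok (BG OH OK phi).
Proof.
  intros [HT [_ HM]] [KT [_ KM]] Hphi. split; [|split; [|split; [|split]]].
  - exists (NB phi (fun _ => True) (fun _ => True) (1/2)).
    apply mkBG; try apply open_full; auto; lra.
  - intros N [U [V [e [OU [Ue [OV [Ve [he [he2 HN]]]]]]]]]. apply HN.
    unfold NB. simpl. rewrite hom_one, tzero_val by auto. repeat split; auto; lra.
  - intros N1 N2 [U1 [V1 [e1 [OU1 [U1e [OV1 [V1e [he1 [he1' H1]]]]]]]]]
                 [U2 [V2 [e2 [OU2 [U2e [OV2 [V2e [he2 [he2' H2]]]]]]]]].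
    exists (NB phi (fun x => U1 x /\ U2 x) (fun x => V1 x /\ V2 x) (Rmin e1 e2)). split.
    + pose proof (Rmin_l e1 e2). pose proof (Rmin_r e1 e2).
      apply mkBG; [apply open_inter; auto | split; auto | apply open_inter; auto | split; auto
                  | apply Rmin_glb_lt; auto | lra].
    + intros z [[hv1 hv2] [ht hu]]. pose proof (Rmin_l e1 e2). pose proof (Rmin_r e1 e2).
      split; [apply H1|apply H2]; repeat split; auto; try lra; intro h; apply hu; auto.
  - intros N [U [V [e [OU [Ue [OV [Ve [he [he2 HN]]]]]]]]].
    destruct (halving OH U HT HM OU Ue) as [U' [OU' [U'e HU']]].
    destruct (halving OK V KT KM OV Ve) as [V' [OV' [V'e HV']]].
    exists (NB phi U' V' (e/2)). split.
    + apply mkBG; auto; lra.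
    + intros [x1 t1] [x2 t2] [a1 [b1 c1]] [a2 [b2 c2]]. simpl in *. apply HN.
      unfold NB; simpl. pose proof (tb t1). pose proof (tb t2).
      rewrite Hphi. split; auto.
      destruct (tadd_spec t1 t2) as [[d1 d2]|[d1 d2]]; [|lra].
      rewrite d2. split; [lra|]. intro h0. apply HU'; [apply c1|apply c2]; lra.
  - intros N [c1 c2] [U [V [e [OU [Ue [OV [Ve [he [he2 HN]]]]]]]]].
    destruct (conj_nbhd OH U c1 HT HM OU Ue) as [U' [OU' [U'e HU']]].
    destruct (conj_nbhd OK V (phi c1) KT KM OV Ve) as [V' [OV' [V'e HV']]].
    exists (NB phi U' V' e). split.
    + apply mkBG; auto.
    + intros [x t] [a [b c]]. simpl in *. apply HN. unfold NB; simpl.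
      rewrite tconj, !Hphi, hom_inv; auto.
Qed.

Lemma BG_haus {H K : Grp} (OH : (H -> Prop) -> Prop) (OK : (K -> Prop) -> Prop) (phi : H -> K) :
  is_topology OH -> paratopological OK -> is_hom phi -> (forall x y, phi x = phi y -> x = y) ->
  forall g : GT H, g <> gone -> exists N, BG OH OK phi N /\ forall x y, N x -> N y -> gmul g x <> y.
Proof.
  intros HT HK Hphi Hi [c r] Hg. pose proof HK as [KT _].
  destruct (classic (c = gone)) as [->|Hc].
  - assert (Hr : tval r <> 0).
    { intro E. apply Hg. simpl. f_equal. apply teq. rewrite tzero_val. auto. }
    pose proof (tb r).
    pose proof (Rmin_l (Rmin (tval r) (1 - tval r)) (1/2)).
    pose proof (Rmin_r (Rmin (tval r) (1 - tval r)) (1/2)).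
    pose proof (Rmin_l (tval r) (1 - tval r)). pose proof (Rmin_r (tval r) (1 - tval r)).
    assert (hpos : 0 < Rmin (Rmin (tval r) (1 - tval r)) (1/2)).
    { apply Rmin_glb_lt; [apply Rmin_glb_lt|]; lra. }
    set (e := Rmin (Rmin (tval r) (1 - tval r)) (1/2)) in *.
    exists (NB phi (fun _ => True) (fun _ => True) e). split.
    + apply mkBG; try apply open_full; auto; lra.
    + intros [x t] [x' t'] [_ [h1 _]] [_ [h2 _]] E. simpl in *.
      injection E as _ E. pose proof (tb t). pose proof (tb t').
      destruct (tadd_spec r t) as [[d1 d2]|[d1 d2]]; rewrite E in d2; lra.
  - assert (Hpc : phi c <> gone). { intro E. apply Hc, Hi. rewrite hom_one; auto. }
    destruct (sep_nbhd OK (phi c) HK Hpc) as [V [OV [Ve HV]]].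
    exists (NB phi (fun _ => True) V (1/2)). split.
    + apply mkBG; try apply open_full; auto; lra.
    + intros [x t] [x' t'] [h1 _] [h2 _] E. simpl in *. injection E as E _.
      apply (HV (phi x') (phi x) h2 h1). rewrite <- E, Hphi. gsimpl. reflexivity.
Qed.

Lemma BG_tb {H K : Grp} (OH : (H -> Prop) -> Prop) (OK : (K -> Prop) -> Prop) (phi : H -> K) :
  totally_bounded OK -> is_hom phi -> (forall k, exists x, phi x = k) ->
  forall N, BG OH OK phi N -> exists F : list (GT H),
      (forall g : GT H, exists f u, In f F /\ N u /\ g = gmul f u) /\
      (forall g : GT H, exists f u, In f F /\ N u /\ g = gmul u f).
Proof.
  intros TB Hphi Hs N [U [V [e [OU [Ue [OV [Ve [he [he2 HN]]]]]]]]].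
  destruct (TB V) as [FK [C1 C2]]. { exists V; auto. }
  destruct (tcover e he) as [FT HT].
  set (pinv := fun k : K => epsilon (inhabits (@gone H)) (fun h => phi h = k)).
  assert (Hp : forall k, phi (pinv k) = k).
  { intro k. unfold pinv. apply epsilon_spec. apply Hs. }
  exists (list_prod (map pinv FK) FT). split.
  - intros [g s]. destruct (C1 (phi g)) as [k [v [Hk [Vv E]]]].
    destruct (HT s) as [r [t [Hr [ht Es]]]].
    exists (pinv k, r), (gmul (ginv (pinv k)) g, t). split.
    { apply in_prod; auto. apply in_map; auto. }
    split.
    + apply HN. unfold NB; simpl. rewrite Hphi, hom_inv, Hp, E by auto. gsimpl.
      repeat split; auto; lra.
    + simpl. rewrite <- Es. gsimpl. reflexivity.
  - intros [g s]. destruct (C2 (phi g)) as [k [v [Hk [Vv E]]]].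
    destruct (HT s) as [r [t [Hr [ht Es]]]].
    exists (pinv k, r), (gmul g (ginv (pinv k)), t). split.
    { apply in_prod; auto. apply in_map; auto. }
    split.
    + apply HN. unfold NB; simpl. rewrite Hphi, hom_inv, Hp, E by auto. gsimpl.
      repeat split; auto; lra.
    + simpl. rewrite tadd_comm, <- Es. gsimpl. reflexivity.
Qed.

Close Scope R_scope.

Open Scope R_scope.

Definition NF {H K : Grp} (phi : H -> K) (V : K -> Prop) (e : R) (z : GT H) : Prop :=
  V (phi (fst z)) /\ (tval (snd z) < e \/ 1 - e < tval (snd z)).

Definition BF {H K : Grp} (OK : (K -> Prop) -> Prop) (phi : H -> K) (N : GT H -> Prop) : Prop :=
  exists V e, OK V /\ V gone /\ 0 < e /\ e <= 1/2 /\ forall z, N z <-> NF phi V e z.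

Lemma mkBF {H K : Grp} (OK : (K -> Prop) -> Prop) (phi : H -> K) V e :
  OK V -> V gone -> 0 < e -> e <= 1/2 -> BF OK phi (NF phi V e).
Proof. intros. exists V, e. repeat (split; [assumption|]). intro; tauto. Qed.

Lemma BF_ok {H K : Grp} (OK : (K -> Prop) -> Prop) (phi : H -> K) :
  paratopological OK -> is_hom phi -> base_ok (BF (H:=H) OK phi).
Proof.
  intros [KT [_ KM]] Hphi. split; [|split; [|split; [|split]]].
  - exists (NF phi (fun _ => True) (1/2)). apply mkBF; try apply open_full; auto; lra.
  - intros N [V [e [OV [Ve [he [he2 HN]]]]]]. apply HN.
    unfold NF. simpl. rewrite hom_one, tzero_val by auto. split; auto; lra.
  - intros N1 N2 [V1 [e1 [OV1 [V1e [he1 [he1' H1]]]]]] [V2 [e2 [OV2 [V2e [he2 [he2' H2]]]]]].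
    pose proof (Rmin_l e1 e2). pose proof (Rmin_r e1 e2).
    exists (NF phi (fun x => V1 x /\ V2 x) (Rmin e1 e2)). split.
    + apply mkBF; [apply open_inter; auto | split; auto | apply Rmin_glb_lt; auto | lra].
    + intros z [[hv1 hv2] ht].
      split; [apply H1|apply H2]; split; auto; lra.
  - intros N [V [e [OV [Ve [he [he2 HN]]]]]].
    destruct (halving OK V KT KM OV Ve) as [V' [OV' [V'e HV']]].
    exists (NF phi V' (e/2)). split.
    + apply mkBF; auto; lra.
    + intros [x1 t1] [x2 t2] [a1 b1] [a2 b2]. simpl in *. apply HN.
      unfold NF; simpl. pose proof (tb t1). pose proof (tb t2).
      rewrite Hphi. split; auto.
      destruct (tadd_spec t1 t2) as [[d1 d2]|[d1 d2]]; rewrite d2; lra.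
  - intros N [c1 c2] [V [e [OV [Ve [he [he2 HN]]]]]].
    destruct (conj_nbhd OK V (phi c1) KT KM OV Ve) as [V' [OV' [V'e HV']]].
    exists (NF phi V' e). split.
    + apply mkBF; auto.
    + intros [x t] [a b]. simpl in *. apply HN. unfold NF; simpl.
      rewrite tconj, !Hphi, hom_inv; auto.
Qed.

Lemma BF_inv {H K : Grp} (OK : (K -> Prop) -> Prop) (phi : H -> K) :
  topological_group OK -> is_hom phi ->
  forall N, BF (H:=H) OK phi N -> exists N', BF OK phi N' /\ forall x, N' x -> N (ginv x).
Proof.
  intros [[KT _] KI] Hphi N [V [e [OV [Ve [he [he2 HN]]]]]].
  exists (NF phi (fun k => V (ginv k)) e). split.
  - apply mkBF; auto. rewrite inv1. auto.
  - intros [x t] [a b]. simpl in *. apply HN. unfold NF; simpl. rewrite hom_inv by auto.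
    split; auto. pose proof (tb t).
    destruct (tinv_spec t) as [[d1 d2]|[d1 d2]]; rewrite d2; lra.
Qed.

Lemma tdiff (e : R) (r : Tc) : 0 < e -> e <= 1/2 -> (tval r < e \/ 1 - e < tval r) ->
  exists s t : Tc, 0 < tval s < e /\ 0 < tval t < e /\ r = tadd s (tinv t).
Proof.
  intros he he2 hr. pose proof (tb r).
  destruct hr as [hr|hr].
  - exists (tmk ((tval r + e)/2)), (tmk ((e - tval r)/2)).
    assert (T1 : tval (tmk ((tval r + e)/2)) = (tval r + e)/2) by (apply tmk_val; lra).
    assert (T2 : tval (tmk ((e - tval r)/2)) = (e - tval r)/2) by (apply tmk_val; lra).
    rewrite T1, T2. split; [lra|]. split; [lra|]. apply teq.
    destruct (tinv_spec (tmk ((e - tval r) / 2))) as [[d1 d2]|[d1 d2]]; rewrite T2 in d1; [lra|].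
    destruct (tadd_spec (tmk ((tval r + e) / 2)) (tinv (tmk ((e - tval r) / 2)))) as [[c1 c2]|[c1 c2]];
    rewrite d2, T1, T2 in *; lra.
  - exists (tmk ((e - 1 + tval r)/2)), (tmk ((e + 1 - tval r)/2)).
    assert (T1 : tval (tmk ((e - 1 + tval r)/2)) = (e - 1 + tval r)/2) by (apply tmk_val; lra).
    assert (T2 : tval (tmk ((e + 1 - tval r)/2)) = (e + 1 - tval r)/2) by (apply tmk_val; lra).
    rewrite T1, T2. split; [lra|]. split; [lra|]. apply teq.
    destruct (tinv_spec (tmk ((e + 1 - tval r) / 2))) as [[d1 d2]|[d1 d2]]; rewrite T2 in d1; [lra|].
    destruct (tadd_spec (tmk ((e - 1 + tval r) / 2)) (tinv (tmk ((e + 1 - tval r) / 2)))) as [[c1 c2]|[c1 c2]];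
    rewrite d2, T1, T2 in *; lra.
Qed.

Lemma BF_flat {H K : Grp} (OH : (H -> Prop) -> Prop) (OK : (K -> Prop) -> Prop) (phi : H -> K) :
  paratopological OH -> topological_group OK -> is_hom phi ->
  is_flat (topo (BG OH OK phi)) (topo (BF OK phi)).
Proof.
  intros HH HK Hphi. pose proof HK as [HKp _]. pose proof (BF_ok (H:=H) OK phi HKp Hphi) as Hok.
  split; [|split].
  - split; [apply topo_top; auto|]. split; [apply topo_mul; auto|].
    apply topo_inv; auto. apply BF_inv; auto.
  - intros W HW p Wp. destruct (HW p Wp) as [N [[V [e [OV [Ve [he [he2 HN]]]]]] HN2]].
    exists (NB phi (fun _ => True) V e). split.
    + apply mkBG; try apply open_full; auto; pose proof HH as [? _]; auto.
    + intros z [a [b _]]. apply HN2, HN. split; auto.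
  - intros rho [rT [rM rI]] Hsub W HW p Wp.
    set (W' := fun z => W (gmul p z)).
    assert (OW' : rho W') by (apply transl; auto).
    assert (W'e : W' (gmul gone gone)) by (unfold W'; rewrite gmul1, mulr1; auto).
    destruct (rM gone gone W' OW' W'e) as [A1 [B1 [OA1 [OB1 [A1e [B1e HAB]]]]]].
    set (A := fun z => A1 z /\ B1 (ginv z)).
    assert (OA : rho A) by (apply open_inter; auto).
    assert (Ae : A gone) by (split; auto; rewrite inv1; auto).
    destruct (Hsub A OA gone Ae) as [N0 [[U [V [e [OU [Ue [OV [Ve [he [he2 HN]]]]]]]]] HN2]].
    exists (NF phi V e). split; [apply mkBF; auto|].
    intros [x r] [Vx Hr]. simpl in Vx.
    destruct (tdiff e r he he2 Hr) as [s [t [hs [ht Er]]]].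
    assert (Aa : A (x, s)).
    { rewrite <- (@gmul1 (GT H) (x, s)). apply HN2, HN. unfold NB; simpl. repeat split; auto; lra. }
    assert (Ab : A (gone, t)).
    { rewrite <- (@gmul1 (GT H) (gone, t)). apply HN2, HN. unfold NB; simpl.
      rewrite hom_one by auto. repeat split; auto; lra. }
    destruct Aa as [Aa _]. destruct Ab as [_ Bb].
    specialize (HAB _ _ Aa Bb). unfold W' in HAB.
    replace (x, r) with (@gmul (GT H) (x, s) (@ginv (GT H) (gone, t))); auto.
    simpl. rewrite inv1, mulr1, <- Er. reflexivity.
Qed.

Lemma BF_closed {H K : Grp} (OK : (K -> Prop) -> Prop) (phi : H -> K) :
  paratopological OK ->
  closed_in (topo (BF OK phi)) (fun g => exists h, (fun h0 : H => (h0, tzero) : GT H) h = g).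
Proof.
  intros HK [x s] Hn.
  assert (hs : tval s <> 0).
  { intro E. apply Hn. exists x. simpl. f_equal. apply teq. rewrite tzero_val. auto. }
  pose proof (tb s). pose proof (Rmin_l (tval s / 2) ((1 - tval s)/2)).
  pose proof (Rmin_r (tval s / 2) ((1 - tval s)/2)).
  assert (hpos : 0 < Rmin (tval s / 2) ((1 - tval s)/2)) by (apply Rmin_glb_lt; lra).
  exists (NF phi (fun _ => True) (Rmin (tval s / 2) ((1 - tval s)/2))). split.
  - pose proof HK as [KT _]. apply mkBF; try apply open_full; auto; lra.
  - intros [y t] [_ ht]. simpl in ht. intros [h E]. simpl in E. injection E as _ E.
    pose proof (tb t). destruct (tadd_spec s t) as [[c1 c2]|[c1 c2]];
    rewrite <- E, tzero_val in c2; lra.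
Qed.

Lemma GT_embed {H K : Grp} (OH : (H -> Prop) -> Prop) (OK : (K -> Prop) -> Prop) (phi : H -> K) :
  paratopological OH -> paratopological OK -> is_hom phi -> continuous_map OH OK phi ->
  subgroup_embedding OH (topo (BG OH OK phi)) (fun h => (h, tzero) : GT H).
Proof.
  intros HH HK Hphi Hc. pose proof HH as [HT [_ HM]]. pose proof HK as [KT _].
  pose proof (BG_ok OH OK phi HH HK Hphi) as Hok.
  split; [|split].
  - intros x y. simpl. rewrite tadd0. reflexivity.
  - intros x y E. injection E. auto.
  - intro U. split.
    + intro OU. exists (Iint (BG OH OK phi) (fun z => tval (snd z) = 0 -> U (fst z))).
      split; [apply topo_I; auto|]. intro x. split.
      * intro Ux. destruct (left_nbhd OH U x HT HM OU Ux) as [U' [OU' [U'e HU']]].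
        exists (NB phi U' (fun _ => True) (1/2)). split.
        -- apply mkBG; try apply open_full; auto; lra.
        -- intros [y t] [_ [_ h]]. simpl. rewrite tadd0. auto.
      * intro Hx. apply Iint_sub in Hx; auto. apply Hx. simpl. apply tzero_val.
    + intros [V [OV HV]]. apply open_of_local; auto. intros x Ux.
      destruct (OV _ (proj1 (HV x) Ux)) as [N [[U1 [V1 [e [OU1 [U1e [OV1 [V1e [he [he2 HN]]]]]]]]] HN2]].
      exists (fun y => U1 (gmul (ginv x) y) /\ V1 (phi (gmul (ginv x) y))). split.
      * apply open_inter; auto.
        { apply (transl OH U1); auto. }
        { apply (transl OH (fun y => V1 (phi y))); auto. }
      * split. { rewrite gmulV, hom_one; auto. }
        intros y [h1 h2]. apply HV.
        specialize (HN2 (gmul (ginv x) y, tzero)).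
        replace (y, tzero) with (@gmul (GT H) (x, tzero) (gmul (ginv x) y, tzero)).
        -- apply HN2, HN. unfold NB; simpl. rewrite tzero_val. repeat split; auto; lra.
        -- simpl. rewrite cancR, tadd0. reflexivity.
Qed.

Close Scope R_scope.

Lemma a_to_c {H : Grp} (OH : (H -> Prop) -> Prop) :
  paratopological OH -> bohr_separated OH ->
   exists (G : Grp) (OG : (G -> Prop) -> Prop) (f : H -> G),
     paratopological OG /\ totally_bounded OG /\ subgroup_embedding OH OG f /\
     flat_closed OG (fun g => exists h, f h = g).
Proof.
  intros HH [K [OK [phi [HKt [HKtb [Hphi [Hc [Hi Hs]]]]]]]].
  pose proof HKt as [HK _]. pose proof HH as [HT _].
  pose proof (BG_ok OH OK phi HH HK Hphi) as Hok.
  exists (GT H), (topo (BG OH OK phi)), (fun h => (h, tzero)).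
  split; [|split; [|split]].
  - split; [apply topo_top; auto|]. split; [|apply topo_mul; auto].
    apply topo_haus; auto. apply BG_haus; auto.
  - apply topo_tb; auto. apply BG_tb; auto.
  - apply GT_embed; auto.
  - exists (topo (BF OK phi)). split; [apply BF_flat; auto|]. apply BF_closed; auto.
Qed.

Theorem corollary5 (H : Grp) (OH : (H -> Prop) -> Prop) :
  paratopological OH ->
  (bohr_separated OH <->
   exists (G : Grp) (OG : (G -> Prop) -> Prop) (f : H -> G),
     paratopological OG /\ totally_bounded OG /\ subgroup_embedding OH OG f) /\
  ((exists (G : Grp) (OG : (G -> Prop) -> Prop) (f : H -> G),
     paratopological OG /\ totally_bounded OG /\ subgroup_embedding OH OG f) <->
   exists (G : Grp) (OG : (G -> Prop) -> Prop) (f : H -> G),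
     paratopological OG /\ totally_bounded OG /\ subgroup_embedding OH OG f /\
     flat_closed OG (fun g => exists h, f h = g)).
Proof.
  intro HH. split; split.
  - intro Hb. destruct (a_to_c OH HH Hb) as [G [OG [f [? [? [? _]]]]]].
    exists G, OG, f. auto.
  - apply b_to_a.
  - intro Hb. apply a_to_c; auto. apply b_to_a; auto.
  - intros [G [OG [f [? [? [? _]]]]]]. exists G, OG, f. auto.
Qed.
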